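(* Let $k_1,k_3,a_2,a_5$ be real constants with $(a_2,a_5)\neq(0,0)$, let $r=\sqrt{x^2+y^2}$, and consider the Newtonian system $\ddot x=-\partial_x V_5$, $\ddot y=-\partial_y V_5$ on the region where $r\neq 0$ and $a_2y-a_5x\neq0$, with potential $$V_5=\frac{k_1}{(a_2y-a_5x)^2}+\frac{k_3(a_2x+a_5y)}{r(a_2y-a_5x)^2}.$$ Let \begin{align*} \tilde J_3=&(x\dot y-y\dot x)^2(a_2\dot x+a_5\dot y)+\frac{2k_1r^2}{(a_2y-a_5x)^2}(a_2\dot x+a_5\dot y)+\frac{k_3r}{a_2y-a_5x}(a_2\dot y-a_5\dot x)\\ &-\frac{k_3(a_2x+a_5y)}{r(a_2y-a_5x)}(x\dot y-y\dot x)+\frac{2k_3(a_2x+a_5y)r}{(a_2y-a_5x)^2}(a_2\dot x+a_5\dot y). \end{align*} Then the time-dependent function $$J_5=-t\,\tilde J_3+(a_2x+a_5y)(x\dot y-y\dot x)^2+\frac{2k_1r^2(a_2x+a_5y)}{(a_2y-a_5x)^2}+\frac{2k_3r(a_2x+a_5y)^2}{(a_2y-a_5x)^2}+k_3r$$ is constant along every solution (as is $\tilde J_3$). *)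

(* Defs.v *)
From Stdlib Require Import Reals.
From Coquelicot Require Import Coquelicot.
Open Scope R_scope.

Definition rad (x y : R) : R := sqrt (x ^ 2 + y ^ 2).

Definition V5 (k1 k3 a2 a5 : R) (x y : R) : R :=
  k1 / (a2 * y - a5 * x) ^ 2
  + k3 * (a2 * x + a5 * y) / (rad x y * (a2 * y - a5 * x) ^ 2).

Definition J3t (k1 k3 a2 a5 : R) (x y vx vy : R) : R :=
  let r := rad x y in
  let L := x * vy - y * vx in
  let D := a2 * y - a5 * x in
  let S := a2 * x + a5 * y in
  L ^ 2 * (a2 * vx + a5 * vy)
  + 2 * k1 * r ^ 2 / D ^ 2 * (a2 * vx + a5 * vy)
  + k3 * r / D * (a2 * vy - a5 * vx)
  - k3 * S / (r * D) * L
  + 2 * k3 * S * r / D ^ 2 * (a2 * vx + a5 * vy).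

Definition J5 (k1 k3 a2 a5 : R) (t x y vx vy : R) : R :=
  let r := rad x y in
  let L := x * vy - y * vx in
  let D := a2 * y - a5 * x in
  let S := a2 * x + a5 * y in
  - t * J3t k1 k3 a2 a5 x y vx vy
  + S * L ^ 2
  + 2 * k1 * r ^ 2 * S / D ^ 2
  + 2 * k3 * r * S ^ 2 / D ^ 2
  + k3 * r.

Definition is_solution (k1 k3 a2 a5 a b : R) (x y : R -> R) : Prop :=
  forall t, a < t < b ->
    rad (x t) (y t) <> 0 /\ a2 * y t - a5 * x t <> 0 /\
    ex_derive x t /\ ex_derive y t /\
    ex_derive (Derive x) t /\ ex_derive (Derive y) t /\
    Derive (Derive x) t = - Derive (fun u => V5 k1 k3 a2 a5 u (y t)) (x t) /\
    Derive (Derive y) t = - Derive (fun v => V5 k1 k3 a2 a5 (x t) v) (y t).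

(* Main.v *)
Require Import Defs.
From Stdlib Require Import Reals Nsatz Lra.
From Coquelicot Require Import Coquelicot.
Open Scope R_scope.

Definition Vx k1 k3 a2 a5 u v :=
  let r := rad u v in let D := a2 * v - a5 * u in let S := a2 * u + a5 * v in
  2*k1*a5/D^3 + k3*(a2/(r*D^2) - S*u/(r^3*D^2) + 2*a5*S/(r*D^3)).
Definition Vy k1 k3 a2 a5 u v :=
  let r := rad u v in let D := a2 * v - a5 * u in let S := a2 * u + a5 * v in
  -2*k1*a2/D^3 + k3*(a5/(r*D^2) - S*v/(r^3*D^2) - 2*a2*S/(r*D^3)).

Lemma rad_pos u v : rad u v <> 0 -> 0 < u*(u*1)+v*(v*1).
Proof. unfold rad; intros H. destruct (Rle_lt_dec (u*(u*1)+v*(v*1)) 0) as [h|h]; auto.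
  exfalso; apply H. replace (u^2+v^2) with (u*(u*1)+v*(v*1)) by ring. apply sqrt_neg_0; auto. Qed.

Ltac nz := repeat (apply Rmult_integral_contrapositive_currified); auto; try lra.

Lemma dVx k1 k3 a2 a5 u v : rad u v <> 0 -> a2 * v - a5 * u <> 0 ->
  is_derive (fun u => V5 k1 k3 a2 a5 u v) u (Vx k1 k3 a2 a5 u v).
Proof. intros Hr HD. pose proof (rad_pos _ _ Hr). unfold V5, Vx, rad in *.
  unfold Rminus in *.
  replace (u^2+v^2) with (u*(u*1)+v*(v*1)) in * by ring.
  set (r := sqrt _) in *.
  auto_derive.
  - repeat split; nz.
  - fold r; field; repeat split; nz.
Qed.
Lemma dVy k1 k3 a2 a5 u v : rad u v <> 0 -> a2 * v - a5 * u <> 0 ->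
  is_derive (fun v => V5 k1 k3 a2 a5 u v) v (Vy k1 k3 a2 a5 u v).
Proof. intros Hr HD. pose proof (rad_pos _ _ Hr). unfold V5, Vy, rad in *.
  unfold Rminus in *.
  replace (u^2+v^2) with (u*(u*1)+v*(v*1)) in * by ring.
  set (r := sqrt _) in *.
  auto_derive.
  - repeat split; nz.
  - fold r; field; repeat split; nz.
Qed.

Ltac reduce_r := match goal with Hrr : ?r * ?r = ?X*(?X*1)+?Y*(?Y*1) |- _ => (
    assert (e2 : r^2 = X*(X*1)+Y*(Y*1)) by ((rewrite <- Hrr; ring));
    assert (e3 : r^3 = (X*(X*1)+Y*(Y*1))*r) by ((rewrite <- e2; ring));
    assert (e4 : r^4 = (X*(X*1)+Y*(Y*1))^2) by ((rewrite <- e2; ring));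
    assert (e5 : r^5 = (X*(X*1)+Y*(Y*1))^2*r) by ((rewrite <- e2; ring));
    assert (e6 : r^6 = (X*(X*1)+Y*(Y*1))^3) by ((rewrite <- e2; ring));
    assert (e7 : r^7 = (X*(X*1)+Y*(Y*1))^3*r) by ((rewrite <- e2; ring));
    assert (e8 : r^8 = (X*(X*1)+Y*(Y*1))^4) by ((rewrite <- e2; ring));
    rewrite ?e2, ?e3, ?e4, ?e5, ?e6, ?e7, ?e8;
    ring) end.

Lemma d3 k1 k3 a2 a5 a b x y (Hsol : is_solution k1 k3 a2 a5 a b x y) t :
  a < t < b ->
  is_derive (fun t => J3t k1 k3 a2 a5 (x t) (y t) (Derive x t) (Derive y t)) t 0.
Proof. intros Ht. destruct (Hsol t Ht) as [Hr [HD [ex [ey [evx [evy [Ax Ay]]]]]]].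
  assert (Ex : Derive (fun u => V5 k1 k3 a2 a5 u (y t)) (x t) = Vx k1 k3 a2 a5 (x t) (y t))
    by (apply is_derive_unique; apply dVx; auto).
  assert (Ey : Derive (fun v => V5 k1 k3 a2 a5 (x t) v) (y t) = Vy k1 k3 a2 a5 (x t) (y t))
    by (apply is_derive_unique; apply dVy; auto).
  rewrite Ex in Ax. rewrite Ey in Ay. clear Ex Ey.
  pose proof (rad_pos _ _ Hr) as Hp.
  unfold J3t, Vx, Vy, rad in *. unfold Rminus in *.
  replace ((x t)^2+(y t)^2) with ((x t)*((x t)*1)+(y t)*((y t)*1)) in * by ring.
  auto_derive.
  - repeat split; auto; nz.
  - change (Derive (fun x0 => x x0) t) with (Derive x t).
    change (Derive (fun x0 => y x0) t) with (Derive y t).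
    change (Derive (fun x0 => Derive x x0) t) with (Derive (Derive x) t).
    change (Derive (fun x0 => Derive y x0) t) with (Derive (Derive y) t).
    rewrite Ax, Ay.
    assert (Hrr := sqrt_sqrt _ (Rlt_le _ _ Hp)).
    set (r := sqrt _) in *.
    set (X := x t) in *. set (Y := y t) in *. set (VX := Derive x t) in *. set (VY := Derive y t) in *.
    clearbody r X Y VX VY. clear Ax Ay.
    field_simplify; [| split; nz].
    unfold Rdiv; apply Rmult_eq_0_compat_r.
    reduce_r.
Qed.

Definition F3 k1 k3 a2 a5 (x y : R -> R) t :=
  J3t k1 k3 a2 a5 (x t) (y t) (Derive x t) (Derive y t).

Lemma d5 k1 k3 a2 a5 a b x y (Hsol : is_solution k1 k3 a2 a5 a b x y) t :
  a < t < b ->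
  is_derive (fun t => J5 k1 k3 a2 a5 t (x t) (y t) (Derive x t) (Derive y t)) t 0.
Proof. intros Ht.
  assert (H3 : is_derive (F3 k1 k3 a2 a5 x y) t 0) by exact (d3 _ _ _ _ _ _ _ _ Hsol t Ht).
  destruct (Hsol t Ht) as [Hr [HD [ex [ey [evx [evy [Ax Ay]]]]]]].
  pose proof (rad_pos _ _ Hr) as Hp.
  assert (Ex : Derive (fun u => V5 k1 k3 a2 a5 u (y t)) (x t) = Vx k1 k3 a2 a5 (x t) (y t))
    by (apply is_derive_unique; apply dVx; auto).
  assert (Ey : Derive (fun v => V5 k1 k3 a2 a5 (x t) v) (y t) = Vy k1 k3 a2 a5 (x t) (y t))
    by (apply is_derive_unique; apply dVy; auto).
  apply is_derive_ext with (fun t => - t * F3 k1 k3 a2 a5 x y t +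
     (a2 * x t + a5 * y t) * (x t * Derive y t - y t * Derive x t) ^ 2
     + 2 * k1 * rad (x t) (y t) ^ 2 * (a2 * x t + a5 * y t) / (a2 * y t - a5 * x t) ^ 2
     + 2 * k3 * rad (x t) (y t) * (a2 * x t + a5 * y t) ^ 2 / (a2 * y t - a5 * x t) ^ 2
     + k3 * rad (x t) (y t)).
  { intros u. unfold J5, F3. reflexivity. }
  unfold rad in *. unfold Rminus in *.
  replace ((x t)^2+(y t)^2) with ((x t)*((x t)*1)+(y t)*((y t)*1)) in * by ring.
  auto_derive.
  - repeat split; auto; try nz. exists 0. exact H3.
  - change (Derive (fun x0 => x x0) t) with (Derive x t).
    change (Derive (fun x0 => y x0) t) with (Derive y t).
    change (Derive (fun x0 => Derive x x0) t) with (Derive (Derive x) t).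
    change (Derive (fun x0 => Derive y x0) t) with (Derive (Derive y) t).
    change (Derive (fun x0 => F3 k1 k3 a2 a5 x y x0) t) with (Derive (F3 k1 k3 a2 a5 x y) t).
    rewrite (is_derive_unique _ _ _ H3).
    unfold F3, J3t, rad. unfold Rminus.
    replace ((x t)^2+(y t)^2) with ((x t)*((x t)*1)+(y t)*((y t)*1)) by ring.
    rewrite Ax, Ay, Ex, Ey. unfold Vx, Vy, rad. unfold Rminus.
    replace ((x t)^2+(y t)^2) with ((x t)*((x t)*1)+(y t)*((y t)*1)) by ring.
    assert (Hrr := sqrt_sqrt _ (Rlt_le _ _ Hp)).
    set (r := sqrt _) in *.
    set (X := x t) in *. set (Y := y t) in *. set (VX := Derive x t) in *. set (VY := Derive y t) in *.
    clearbody r X Y VX VY. clear Ax Ay H3.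
    field_simplify; [| split; nz].
    unfold Rdiv; apply Rmult_eq_0_compat_r.
    reduce_r.
Qed.

Lemma const_on (a b : R) (f : R -> R) :
  (forall t, a < t < b -> is_derive f t 0) ->
  forall t1 t2, a < t1 < b -> a < t2 < b -> f t1 = f t2.
Proof. intros Hd t1 t2 H1 H2.
  destruct (Rtotal_order t1 t2) as [h|[h|h]].
  - apply (eq_is_derive f t1 t2); auto. intros t Ht. apply Hd; lra.
  - subst; reflexivity.
  - symmetry. apply (eq_is_derive f t2 t1); auto. intros t Ht. apply Hd; lra.
Qed.

Theorem mainTheorem7 (k1 k3 a2 a5 : R) (Ha : a2 <> 0 \/ a5 <> 0)
  (a b : R) (x y : R -> R) (Hsol : is_solution k1 k3 a2 a5 a b x y) :
  (forall t1 t2, a < t1 < b -> a < t2 < b ->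
     J3t k1 k3 a2 a5 (x t1) (y t1) (Derive x t1) (Derive y t1)
     = J3t k1 k3 a2 a5 (x t2) (y t2) (Derive x t2) (Derive y t2)) /\
  (forall t1 t2, a < t1 < b -> a < t2 < b ->
     J5 k1 k3 a2 a5 t1 (x t1) (y t1) (Derive x t1) (Derive y t1)
     = J5 k1 k3 a2 a5 t2 (x t2) (y t2) (Derive x t2) (Derive y t2)).
Proof. split.
  - apply (const_on a b (fun t => J3t k1 k3 a2 a5 (x t) (y t) (Derive x t) (Derive y t))).
    intros; eapply d3; eauto.
  - apply (const_on a b (fun t => J5 k1 k3 a2 a5 t (x t) (y t) (Derive x t) (Derive y t))).
    intros; eapply d5; eauto.
Qed.
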